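(* Let $n \ge 2$ and let $A \in \mathsf{M}_n(\mathbb{C})$ be convexoid. Then for every $k \in \{1,\ldots,n\}$, the field of values $F(A_{(k)})$ is inscribed in the polygon $\partial F(A)$; that is, $F(A_{(k)})$ has nonempty intersection with every side $\operatorname{co}(\lambda_j,\lambda_{j+1})$, $j = 1,\ldots,d$, of the polygon $\partial F(A)$ (notation as in the context).
   Context: For $B \in \mathsf{M}_m(\mathbb{C})$, the field of values (numerical range) is $F(B) = \{x^\ast B x : x \in \mathbb{C}^m,\ x^\ast x = 1\}$. $A_{(k)}$ denotes the $(n-1)$-by-$(n-1)$ principal submatrix of $A$ obtained by deleting the $k$th row and $k$th column. $\operatorname{co}(S)$ denotes the convex hull of a set $S \subset \mathbb{C}$, and $\sigma(A)$ the spectrum of $A$. $A$ is called convexoid if $F(A) = \operatorname{co}(\sigma(A))$. In that case $F(A)$ is the convex polygon $\operatorname{co}(\lambda_1,\ldots,\lambda_n)$, where $\lambda_1,\ldots,\lambda_n$ are the eigenvalues of $A$; label them so that $\lambda_1,\ldots,\lambda_d$ ($1 \le d \le n$) are the vertices of this polygon, listed consecutively along its boundary, so that $\partial F(A) = \bigcup_{j=1}^d \operatorname{co}(\lambda_j,\lambda_{j+1})$ with the convention $\lambda_{d+1} := \lambda_1$. A set $G$ is said to be inscribed in $F(A)$ if $G \cap \operatorname{co}(\lambda_j,\lambda_{j+1}) \neq \emptyset$ for all $j \in \{1,\ldots,d\}$. *)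

(* Defs.v *)
From HB Require Import structures.
From mathcomp Require Import all_boot all_order all_algebra.
Set Implicit Arguments. Unset Strict Implicit. Unset Printing Implicit Defensive.
Import Order.TTheory GRing.Theory Num.Theory.
Local Open Scope ring_scope.

Section Defs.
Variable C : numClosedFieldType.

Definition field_of_values m (B : 'M[C]_m) : C -> Prop :=
  fun z => exists x : 'cV[C]_m,
    map_mx Num.conj x^T *m x = 1%:M /\ z = (map_mx Num.conj x^T *m B *m x) ord0 ord0.

Definition psubmx n (A : 'M[C]_n.+1) (k : 'I_n.+1) : 'M[C]_n :=
  row' k (col' k A).

Definition spectrum n (A : 'M[C]_n) : C -> Prop := fun a => eigenvalue A a.

Definition co (S : C -> Prop) : C -> Prop :=
  fun z => exists (m : nat) (w p : 'I_m -> C),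
    (forall i, S (p i)) /\ (forall i, 0 <= w i) /\
    \sum_(i < m) w i = 1 /\ z = \sum_(i < m) w i * p i.

Definition seg (a b : C) : C -> Prop := co (fun z => z = a \/ z = b).

Definition convexoid n (A : 'M[C]_n) : Prop :=
  forall z, field_of_values A z <-> co (spectrum A) z.

Definition extreme (S : C -> Prop) (z : C) : Prop :=
  S z /\ forall x y t, S x -> S y -> 0 < t < 1 -> z = t * x + (1 - t) * y -> x = y.

Definition boundary (S : C -> Prop) (z : C) : Prop :=
  (forall e : C, 0 < e -> exists w, S w /\ `|w - z| < e) /\
  (forall e : C, 0 < e -> exists w, ~ S w /\ `|w - z| < e).

(* j-th side co(v_j, v_{j+1}) with v_{d+1} := v_1 (0-based, cyclic) *)
Definition side (v : seq C) (j : nat) : C -> Prop :=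
  seg (nth 0 v j) (nth 0 v (j.+1 %% size v)).

(* v = [lambda_1; ...; lambda_d] are the vertices of the polygon P, listed
   consecutively along its boundary, so that bd P = U_j co(v_j, v_{j+1}) *)
Definition vertex_labeling (P : C -> Prop) (v : seq C) : Prop :=
  uniq v /\ (forall z, z \in v <-> extreme P z) /\
  (forall z, boundary P z <-> exists2 j, (j < size v)%N & side v j z).

Definition inscribed (G P : C -> Prop) : Prop :=
  forall v, vertex_labeling P v ->
  forall j, (j < size v)%N -> exists z, G z /\ side v j z.

End Defs.

(* Main.v *)
Require Import Defs.
From HB Require Import structures.
From mathcomp Require Import all_boot all_order all_algebra.
From mathcomp Require Import ring zify.
From Stdlib Require Import Classical.
Import Order.TTheory GRing.Theory Num.Theory.
Local Open Scope ring_scope.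
Set Implicit Arguments. Unset Strict Implicit. Unset Printing Implicit Defensive.
Section G.
Variable C : numClosedFieldType.
Implicit Types (S : C -> Prop).

Lemma co_convex S x y t : co S x -> co S y -> 0 <= t -> t <= 1 ->
  co S (t * x + (1 - t) * y).
Proof.
move=> [m1 [w1 [p1 [Hp1 [Hw1 [Hs1 ->]]]]]] [m2 [w2 [p2 [Hp2 [Hw2 [Hs2 ->]]]]]] t0 t1.
exists (m1 + m2)%N.
exists (fun i => match split i with inl i1 => t * w1 i1 | inr i2 => (1 - t) * w2 i2 end).
exists (fun i => match split i with inl i1 => p1 i1 | inr i2 => p2 i2 end).
have sl : forall i : 'I_m1, split (lshift m2 i) = inl i by move=> i; exact: (unsplitK (inl i : _ + 'I_m2)).
have sr : forall i : 'I_m2, split (rshift m1 i) = inr i by move=> i; exact: (unsplitK (inr i : 'I_m1 + _)).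
split; first by move=> i; case: split.
split; first by move=> i; case: split => j; apply: mulr_ge0 => //; rewrite subr_ge0.
rewrite !big_split_ord /=.
under eq_bigr do rewrite sl. under [X in _ + X = _]eq_bigr do rewrite sr.
under [X in _ = X + _]eq_bigr do rewrite sl. under [X in _ = _ + X]eq_bigr do rewrite sr.
rewrite -!mulr_sumr Hs1 Hs2 !mulr1 subrKC; split => //.
rewrite !mulr_sumr; congr (_ + _); apply: eq_bigr => i _; by rewrite mulrA.
Qed.

Lemma co_sub S x : S x -> co S x.
Proof.
move=> Sx; exists 1%N, (fun _ => 1), (fun _ => x).
by do !split => //; rewrite big_ord1 ?mul1r.
Qed.

Lemma seg_l (a b : C) : seg a b a.
Proof. by apply: co_sub; left. Qed.
Lemma seg_r (a b : C) : seg a b b.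
Proof. by apply: co_sub; right. Qed.

Lemma seg_comb (a b t : C) : 0 <= t -> t <= 1 -> seg a b (t * a + (1 - t) * b).
Proof. by move=> *; apply: co_convex => //; [apply: seg_l | apply: seg_r]. Qed.

Lemma seg_same (a z : C) : seg a a z -> z = a.
Proof.
move=> [m [w [p [Hp [Hw [Hs ->]]]]]].
rewrite (eq_bigr (fun i => w i * a)); first by rewrite -mulr_suml Hs mul1r.
by move=> i _; case: (Hp i) => ->.
Qed.

Lemma line_seg (P : C -> Prop) (a b z : C) : extreme P a -> extreme P b -> a != b ->
  P z -> 'Im ((z - a) / (b - a)) = 0 -> seg a b z.
Proof.
move=> [Pa exa] [Pb exb] ab Pz /Creal_ImP tR.
set t := (z - a) / (b - a) in tR.
have u0 : b - a != 0 by rewrite subr_eq0 eq_sym.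
have ze : z = a + t * (b - a) by rewrite /t divfK // addrC subrK.
have [t0|t0] := real_leP tR (@real0 _).
-
  have [tz|tn] := eqVneq t 0.
    by rewrite ze tz mul0r addr0; apply: seg_l.
  have tl : t < 0 by rewrite lt_neqAle tn t0.
  have h1 : 1 < 1 - t by rewrite ltrDl oppr_gt0.
  have h0 : 0 < 1 - t by apply: lt_trans h1.
  have h1n : 1 - t != 0 by rewrite gt_eqF.
  have zb := exa z b ((1 - t)^-1) Pz Pb.
  have : z = b.
    apply: zb; first by rewrite invr_gt0 h0 invf_lt1.
    rewrite ze; field; done.
  move=> zbe; move: tl; rewrite /t zbe divff // => /lt_le_trans/(_ ler01).
  by rewrite ltxx.
- have [t1|t1] := real_leP tR (@real1 _).
    have -> : z = (1 - t) * a + (1 - (1 - t)) * b by rewrite ze; ring.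
    by apply: seg_comb; rewrite ?subr_ge0 // lerBlDr lerDl ltW.
  have tp : 0 < t by apply: lt_trans t1.
  have tn : t != 0 by rewrite gt_eqF.
  have : z = a.
    apply: (exb z a (t^-1) Pz Pa); first by rewrite invr_gt0 tp invf_lt1.
    rewrite ze; field; done.
  move=> za; move: tp; by rewrite /t za subrr mul0r ltxx.
Qed.

Lemma key_bound (x y xp yp T d : C) : x \is Num.real -> y \is Num.real -> xp \is Num.real ->
  0 < yp -> 0 <= y -> `|x - 2^-1| < d -> `|y| < d ->
  (`|xp| + `|1 - xp|) / yp <= T -> d * (1 + T) <= 2^-1 ->
  0 <= x - y / yp * xp /\ 0 <= 1 - x - y / yp * (1 - xp).
Proof.
move=> xR yR xpR yp0 y0 hx hy hT hd.
have d0 : 0 <= d by apply: le_trans (ltW hy).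
have ypi : 0 < yp^-1 by rewrite invr_gt0.
have al0 : 0 <= y / yp by rewrite divr_ge0 // ltW.
have ald : y / yp <= d / yp.
  by rewrite ler_pM2r // (le_trans (real_ler_norm yR)) // ltW.
have T1 : `|xp| / yp <= T.
  apply: le_trans hT; rewrite ler_pM2r // lerDl //.
have T2 : `|1 - xp| / yp <= T.
  apply: le_trans hT; rewrite ler_pM2r // lerDr //.
have hxR : x - 2^-1 \is Num.real by rewrite rpredB // rpredV rpred_nat.
move: (ltW hx); rewrite real_ler_distl // => /andP[xl xu].
have bnd : forall c, c \is Num.real -> `|c| / yp <= T -> y / yp * c <= d * T.
  move=> c cR cT; apply: le_trans (_ : y / yp * `|c| <= _).
    by rewrite ler_wpM2l // real_ler_norm.
  apply: le_trans (_ : d / yp * `|c| <= _); first by rewrite ler_wpM2r.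
  by rewrite mulrAC -mulrA ler_wpM2l.
have e0 : 0 <= 2^-1 - d - d * T.
  have -> : 2^-1 - d - d * T = 2^-1 - d * (1 + T) by ring.
  by rewrite subr_ge0.
split.
  apply: le_trans e0 _; apply: lerB => //; apply: bnd => //.
apply: le_trans e0 _; apply: lerB; last by apply: bnd => //; rewrite rpredB ?rpred1.
rewrite -subr_ge0.
have -> : 1 - x - (2^-1 - d) = 2^-1 + d - x.
  by field.
by rewrite subr_ge0.
Qed.

Lemma co3 S (x y z al be ga : C) : co S x -> co S y -> co S z ->
  0 <= al -> 0 <= be -> 0 <= ga -> al + be + ga = 1 ->
  co S (al * x + be * y + ga * z).
Proof.
move=> cx cy cz a0 b0 g0 s1.
have [g1|g1] := eqVneq ga 1.
  have : al + be == 0 by rewrite -(addrK ga (al + be)) s1 g1 subrr.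
  rewrite paddr_eq0 // => /andP[/eqP -> /eqP ->].
  by rewrite g1 !mul0r !add0r mul1r.
set s := al + be.
have s0 : 0 <= s by rewrite addr_ge0.
have sn : s != 0.
  apply: contra g1 => /eqP s0'; rewrite -s1 -/s s0' add0r //.
have sp : 0 < s by rewrite lt_def sn s0.
have gs : ga = 1 - s by rewrite -s1 -/s addrC addKr.
have -> : al * x + be * y + ga * z = s * ((al / s) * x + (1 - al / s) * y) + (1 - s) * z.
  rewrite gs; congr (_ + _); rewrite /s; field; done.
apply: co_convex => //.
  apply: co_convex => //; first by rewrite divr_ge0.
  by rewrite ler_pdivrMr // mul1r lerDl.
by rewrite -subr_ge0 -gs.
Qed.

Lemma norm_Re_le (z : C) : `|'Re z| <= `|z|.
Proof. exact: leif_le (leif_normC_Re_Creal z). Qed.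

Lemma norm_Im_le (z : C) : `|'Im z| <= `|z|.
Proof.
have := norm_Re_le ('i * z); by rewrite ReMil normrN normrM normCi mul1r.
Qed.

Lemma decomp (a u x y xp yp : C) : yp != 0 ->
  a + (x + 'i * y) * u = (y / yp) * (a + (xp + 'i * yp) * u) +
     (x - y / yp * xp) * (a + u) + (1 - x - y / yp * (1 - xp)) * a.
Proof. by move=> yp0; field. Qed.


Lemma interior S (a b p q : C) : a != b -> co S a -> co S b -> co S p -> co S q ->
  0 < 'Im ((p - a) / (b - a)) -> 'Im ((q - a) / (b - a)) < 0 ->
  exists2 e, 0 < e & forall w, `|w - (a + b) / 2| < e -> co S w.
Proof.
move=> ab ca cb cp cq hp hq.
set u := b - a.
have u0 : u != 0 by rewrite subr_eq0 eq_sym.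
have nu0 : 0 < `|u| by rewrite normr_gt0.
set xp := 'Re ((p - a) / u); set yp := 'Im ((p - a) / u).
set xq := 'Re ((q - a) / u); set yq := 'Im ((q - a) / u).
have pE : p = a + (xp + 'i * yp) * u by rewrite -Crect divfK // addrC subrK.
have qE : q = a + (xq + 'i * yq) * u by rewrite -Crect divfK // addrC subrK.
have bE : b = a + u by rewrite addrC subrK.
have yq' : 0 < - yq by rewrite oppr_gt0.
set T := (`|xp| + `|1 - xp|) / yp + (`|xq| + `|1 - xq|) / (- yq).
have Tp : 0 <= (`|xp| + `|1 - xp|) / yp by rewrite divr_ge0 ?addr_ge0 // ltW.
have Tq : 0 <= (`|xq| + `|1 - xq|) / (- yq) by rewrite divr_ge0 ?addr_ge0 // ltW.
have T0 : 0 <= T by rewrite addr_ge0.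
have T1 : 0 < 1 + T by rewrite ltr_wpDr.
set d := (2 * (1 + T))^-1.
have d0 : 0 < d by rewrite invr_gt0 mulr_gt0.
have dT : d * (1 + T) <= 2^-1.
  rewrite /d invfM mulrAC -mulrA divff ?mulr1 //; by rewrite gt_eqF.
exists (d * `|u|); first by rewrite mulr_gt0.
move=> w hw.
set z := (w - a) / u.
have wE : w = a + ('Re z + 'i * 'Im z) * u by rewrite -Crect divfK // addrC subrK.
have hz : `|z - 2^-1| < d.
  have -> : z - 2^-1 = (w - (a + b) / 2) / u by rewrite /z bE; field.
  by rewrite normrM normfV ltr_pdivrMr.
have h2R : (2^-1 : C) \is Num.real by rewrite rpredV rpred_nat.
have hx : `|'Re z - 2^-1| < d.
  apply: le_lt_trans hz; rewrite -{1}(Creal_ReP _ h2R) -raddfB; exact: norm_Re_le.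
have hy : `|'Im z| < d.
  apply: le_lt_trans hz; rewrite -[X in `|X|](subr0 ('Im z)) -{1}((Creal_ImP _) h2R) -raddfB.
  exact: norm_Im_le.
have [y0|y0] := real_leP (@real0 C) (Creal_Im z).
- have [b0 g0] := @key_bound ('Re z) ('Im z) xp yp T d (Creal_Re z) (Creal_Im z) (Creal_Re _) hp y0 hx hy
     (ler_wpDr Tq (lexx _)) dT.
  rewrite wE (@decomp _ _ _ _ xp yp (lt0r_neq0 hp)) -pE -bE.
  apply: co3 => //; first by rewrite divr_ge0 // ltW.
  by rewrite /=; field; rewrite gt_eqF.
- have y0' : 0 <= - 'Im z by rewrite oppr_ge0 ltW.
  have hy' : `|- 'Im z| < d by rewrite normrN.
  have yR' : - 'Im z \is Num.real by rewrite rpredN Creal_Im.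
  have := @key_bound ('Re z) (- 'Im z) xq (- yq) T d (Creal_Re z) yR' (Creal_Re ((q - a) / u)) yq' y0' hx hy'
     (ler_wpDl Tp (lexx _)) dT.
  rewrite invrN mulrNN => -[b0 g0].
  rewrite wE (@decomp _ _ _ _ xq yq (ltr0_neq0 hq)) -qE -bE.
  apply: co3 => //; first by rewrite -mulrNN -invrN divr_ge0 // ltW.
  by field; rewrite lt_eqF.
Qed.

End G.
Section M.
Variable C : numClosedFieldType.

Definition cT m (x : 'cV[C]_m) : 'rV[C]_m := map_mx Num.conj x^T.
Definition bf m (B : 'M[C]_m) (y x : 'cV[C]_m) : C := (cT y *m B *m x) ord0 ord0.
Definition nrm2 m (x : 'cV[C]_m) : C := (cT x *m x) ord0 ord0.

Lemma bfE m (B : 'M[C]_m) y x :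
  bf B y x = \sum_i \sum_j (y i ord0)^* * B i j * x j ord0.
Proof.
rewrite /bf mxE exchange_big /=; apply: eq_bigr => j _.
rewrite mxE big_distrl /=; apply: eq_bigr => i _; by rewrite !mxE.
Qed.

Lemma nrm2E m (x : 'cV[C]_m) : nrm2 x = \sum_i (x i ord0)^* * x i ord0.
Proof. rewrite /nrm2 mxE; apply: eq_bigr => i _; by rewrite !mxE. Qed.

Lemma cTD m (x y : 'cV[C]_m) : cT (x + y) = cT x + cT y.
Proof. by rewrite /cT linearD /= map_mxD. Qed.
Lemma cTZ m c (x : 'cV[C]_m) : cT (c *: x) = c^* *: cT x.
Proof. by rewrite /cT linearZ /= map_mxZ. Qed.

Lemma bfDl m (B : 'M[C]_m) y1 y2 x : bf B (y1 + y2) x = bf B y1 x + bf B y2 x.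
Proof. by rewrite /bf cTD !mulmxDl mxE. Qed.
Lemma bfDr m (B : 'M[C]_m) y x1 x2 : bf B y (x1 + x2) = bf B y x1 + bf B y x2.
Proof. by rewrite /bf mulmxDr mxE. Qed.
Lemma bfZl m (B : 'M[C]_m) c y x : bf B (c *: y) x = c^* * bf B y x.
Proof. by rewrite /bf cTZ -!scalemxAl mxE. Qed.
Lemma bfZr m (B : 'M[C]_m) c y x : bf B y (c *: x) = c * bf B y x.
Proof. by rewrite /bf -scalemxAr mxE. Qed.
Lemma bfDm m (B1 B2 : 'M[C]_m) y x : bf (B1 + B2) y x = bf B1 y x + bf B2 y x.
Proof. by rewrite /bf mulmxDr mulmxDl mxE. Qed.
Lemma bfNm m (B : 'M[C]_m) y x : bf (- B) y x = - bf B y x.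
Proof. by rewrite /bf mulmxN mulNmx mxE. Qed.
Lemma bfZm m (B : 'M[C]_m) c y x : bf (c *: B) y x = c * bf B y x.
Proof. by rewrite /bf -scalemxAr -scalemxAl mxE. Qed.
Lemma bf1 m (y x : 'cV[C]_m) : bf 1%:M y x = (cT y *m x) ord0 ord0.
Proof. by rewrite /bf mulmx1. Qed.

Definition adj m (B : 'M[C]_m) : 'M[C]_m := map_mx Num.conj B^T.

Lemma bf_conj m (B : 'M[C]_m) y x : (bf B y x)^* = bf (adj B) x y.
Proof.
rewrite !bfE rmorph_sum exchange_big /=; apply: eq_bigr => i _.
rewrite rmorph_sum; apply: eq_bigr => j _.
rewrite !rmorphM /= conjCK !mxE; ring.
Qed.


Lemma nrm2_ge0 m (x : 'cV[C]_m) : 0 <= nrm2 x.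
Proof. rewrite nrm2E sumr_ge0 // => i _; by rewrite mulrC mul_conjC_ge0. Qed.

Lemma nrm2_eq0 m (x : 'cV[C]_m) : nrm2 x = 0 -> x = 0.
Proof.
rewrite nrm2E => /psumr_eq0P h; apply/matrixP => i j.
rewrite (ord1 j) mxE; apply/eqP; rewrite -mul_conjC_eq0 mulrC h //.
by move=> k _; rewrite mulrC mul_conjC_ge0.
Qed.

Lemma nrm2Z m c (x : 'cV[C]_m) : nrm2 (c *: x) = c^* * c * nrm2 x.
Proof. by rewrite /nrm2 cTZ -scalemxAl -scalemxAr !mxE mulrA. Qed.

Lemma bfZZ m (B : 'M[C]_m) c x : bf B (c *: x) (c *: x) = c^* * c * bf B x x.
Proof. by rewrite bfZl bfZr mulrA. Qed.

Lemma normalize m (x : 'cV[C]_m) : x != 0 ->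
  exists r u, [/\ 0 < r, x = r *: u & nrm2 u = 1].
Proof.
move=> x0.
have n0 : 0 < nrm2 x.
  rewrite lt_def nrm2_ge0 andbT; apply/eqP => /nrm2_eq0 h; by rewrite h eqxx in x0.
set r := sqrtC (nrm2 x).
have r0 : 0 < r by rewrite sqrtC_gt0.
have rn : r != 0 by rewrite gt_eqF.
exists r, (r^-1 *: x); split => //; first by rewrite scalerA divff // scale1r.
rewrite nrm2Z (geC0_conj (ltW _)) ?invr_gt0 //.
by rewrite -invfM -expr2 sqrtCK mulVf // gt_eqF.
Qed.

Lemma cross0 m (P : 'M[C]_m) x y : (forall z, 0 <= bf P z z) ->
  bf P x x = 0 -> bf P y y = 0 -> bf P x y = 0.
Proof.
move=> psd hx hy.
have H : forall c, 0 <= c * bf P x y + c^* * bf P y x.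
  move=> c; have := psd (x + c *: y).
  by rewrite !bfDl !bfDr !bfZl !bfZr hx hy !mulr0 add0r addr0 addrC.
have h1 := H 1; have h2 := H (-1); have h3 := H 'i; have h4 := H (- 'i).
rewrite conjC1 !mul1r in h1; rewrite conjCN1 !mulN1r -opprD oppr_ge0 in h2.
have s0 : bf P x y + bf P y x = 0 by apply: le_anti; rewrite h1 h2.
have ci : ('i : C)^* = - 'i := conjCi C. have cni : (- 'i : C)^* = 'i by rewrite rmorphN /= ci opprK.
rewrite ci mulNr in h3; rewrite cni mulNr addrC -opprB oppr_ge0 in h4.
have t0 : 'i * bf P x y - 'i * bf P y x = 0 by apply: le_anti; rewrite h3 h4.
have e : bf P x y = bf P y x.
  move: t0; rewrite -mulrBr => /eqP; rewrite mulf_eq0 (negPf (@neq0Ci C)) /=.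
  by rewrite subr_eq0 => /eqP.
move: s0; rewrite -e => /eqP; rewrite -mulr2n -mulr_natr mulf_eq0 pnatr_eq0 orbF.
by move/eqP.
Qed.

Lemma comb0 m (P : 'M[C]_m) x y al be : (forall z, 0 <= bf P z z) ->
  bf P x x = 0 -> bf P y y = 0 -> bf P (al *: x + be *: y) (al *: x + be *: y) = 0.
Proof.
move=> psd hx hy.
have hxy := cross0 psd hx hy; have hyx := cross0 psd hy hx.
by rewrite !bfDl !bfDr !bfZl !bfZr hx hy hxy hyx !mulr0 !addr0.
Qed.


Lemma unit_iff m (x : 'cV[C]_m) : map_mx Num.conj x^T *m x = 1%:M <-> nrm2 x = 1.
Proof.
split; first by rewrite /nrm2 /cT => ->; rewrite mxE.
move=> h; rewrite [LHS]mx11_scalar; congr (_%:M); exact: h.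
Qed.

Lemma sub_fov n (A : 'M[C]_n.+1) k (u : 'cV[C]_n.+1) : u k ord0 = 0 -> nrm2 u = 1 ->
  field_of_values (psubmx A k) (bf A u u).
Proof.
move=> uk un; exists (row' k u); split.
  apply/unit_iff; rewrite -un !nrm2E (bigD1_ord k) //= uk mulr0 add0r.
  by apply: eq_bigr => i _; rewrite !mxE.
rewrite -/(bf _ _ _) !bfE (bigD1_ord k) //= big1 ?add0r; last first.
  by move=> j _; rewrite uk conjC0 !mul0r.
apply: eq_bigr => i _; rewrite (bigD1_ord k) //= uk mulr0 add0r.
by apply: eq_bigr => j _; rewrite !mxE.
Qed.


Lemma fovE m (A : 'M[C]_m) z :
  field_of_values A z <-> exists x, nrm2 x = 1 /\ z = bf A x x.
Proof.
split; move=> [x [h1 h2]]; exists x; split => //; by apply/unit_iff.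
Qed.

Lemma ML n (A : 'M[C]_n.+1) k (cb M2 a b : C) :
  (forall z, field_of_values A z -> cb * z + (cb * z)^* <= M2) ->
  field_of_values A a -> field_of_values A b -> a != b ->
  cb * a + (cb * a)^* = M2 -> cb * b + (cb * b)^* = M2 ->
  exists z, [/\ field_of_values (psubmx A k) z, field_of_values A z &
                cb * z + (cb * z)^* = M2].
Proof.
move=> hF Fa Fb ab ea eb.
set P := M2 *: 1%:M - (cb *: A + cb^* *: adj A).
have bfP : forall z, bf P z z = M2 * nrm2 z - (cb * bf A z z + (cb * bf A z z)^*).
  move=> z; rewrite /P bfDm bfNm bfDm !bfZm bf1 -bf_conj rmorphM //.
have psd : forall z, 0 <= bf P z z.
  move=> z; have [->|z0] := eqVneq z 0.
    by rewrite -(scale0r (0 : 'cV[C]_n.+1)) bfZZ conjC0 !mul0r.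
  have [r [u [r0 -> un]]] := normalize z0.
  rewrite bfZZ mulr_ge0 //; first by rewrite mulrC mul_conjC_ge0.
  rewrite bfP un mulr1 subr_ge0; apply: hF; apply/fovE; by exists u.
have [x [xn ax]] := (fovE A a).1 Fa.
have [y [yn byy]] := (fovE A b).1 Fb.
have Px : bf P x x = 0 by rewrite bfP xn mulr1 -ax ea subrr.
have Py : bf P y y = 0 by rewrite bfP yn mulr1 -byy eb subrr.
have [xk|xk] := eqVneq (x k ord0) 0.
  exists a; split => //; first by rewrite ax; apply: sub_fov.
set w := y k ord0 *: x + (- x k ord0) *: y.
have Pw : bf P w w = 0 by apply: comb0.
have wk : w k ord0 = 0 by rewrite !mxE mulNr mulrC subrr.
have w0 : w != 0.
  apply/eqP => w0.
  have ye : y = (y k ord0 / x k ord0) *: x.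
    apply: (@scalerI _ _ (x k ord0)) => //.
    rewrite scalerA mulrCA divff // mulr1.
    by move/eqP: w0; rewrite addr_eq0 scaleNr opprK => /eqP ->.
  set g := y k ord0 / x k ord0 in ye.
  have gg : g^* * g = 1 by move: yn; rewrite ye nrm2Z xn mulr1.
  by move: ab; rewrite ax byy ye bfZZ gg mul1r eqxx.
have [r [u [r0 wE un]]] := normalize w0.
have rn : r != 0 by rewrite gt_eqF.
have uk : u k ord0 = 0.
  by move: wk; rewrite wE mxE => /eqP; rewrite mulf_eq0 (negPf rn) => /eqP.
have Pu : bf P u u = 0.
  move: Pw; rewrite wE bfZZ => /eqP; rewrite mulf_eq0 mulf_eq0 conjC_eq0 (negPf rn) /=.
  by move/eqP.
exists (bf A u u); split; first exact: sub_fov.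
  by apply/fovE; exists u.
by move: Pu; rewrite bfP un mulr1 => /eqP; rewrite subr_eq0 => /eqP.
Qed.

End M.
Section F.
Variable C : numClosedFieldType.

Lemma finite_spec m (A : 'M[C]_m) : exists s : seq C, forall z, spectrum A z <-> z \in s.
Proof.
have [s hs] := closed_field_poly_normal (char_poly A).
exists s => z; rewrite /spectrum eigenvalue_root_char hs.
have /monicP -> := char_poly_monic A.
by rewrite scale1r root_prod_XsubC.
Qed.

Lemma max_seq (s : seq C) (f : C -> C) : (forall x, f x \is Num.real) -> s != [::] ->
  exists2 x, x \in s & forall y, y \in s -> f y <= f x.
Proof.
move=> fR; elim: s => // x s IH _.
have [->|sn] := eqVneq s [::].
  by exists x; rewrite ?mem_head // => y; rewrite inE => /eqP ->.
have [y ys hy] := IH sn.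
have [le|lt] := real_leP (fR x) (fR y).
  exists y; first by rewrite inE ys orbT.
  by move=> z; rewrite inE => /orP[/eqP ->|/hy].
exists x; first by rewrite mem_head.
move=> z; rewrite inE => /orP[/eqP ->//|/hy h]; exact: le_trans h (ltW lt).
Qed.

Lemma co_le (S : C -> Prop) (c M z : C) : (forall x, S x -> 'Re (c * x) <= M) ->
  co S z -> 'Re (c * z) <= M.
Proof.
move=> h [m [w [p [Hp [Hw [Hs ->]]]]]].
rewrite mulr_sumr raddf_sum /=.
apply: le_trans (_ : \sum_(i < m) w i * M <= _).
  apply: ler_sum => i _; rewrite mulrCA ReMl; last by rewrite ger0_real.
  by apply: ler_wpM2l => //; apply: h.
by rewrite -mulr_suml Hs mul1r.
Qed.

Lemma D1 (S : C -> Prop) (s : seq C) (v0 : C) :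
  (forall z, S z <-> z \in s) ->
  (forall z, boundary (co S) z -> z = v0) -> co S v0 ->
  forall p, co S p -> p = v0.
Proof.
move=> hs hb hv p hp; apply/eqP/negP => /negP pv.
set c := (p - v0)^*.
have sn : s != [::].
  move: hp => [m [w [q [Hq [Hw [Hsum _]]]]]].
  case: m w q Hq Hw Hsum => [|m] w q Hq Hw Hsum.
    by rewrite big_ord0 in Hsum; move/eqP: Hsum; rewrite eq_sym oner_eq0.
  by apply/eqP => s0; have := (hs (q ord0)).1 (Hq ord0); rewrite s0.
have [l ls hl] := max_seq (fun z => Creal_Re (c * z)) sn.
have cle : forall z, co S z -> 'Re (c * z) <= 'Re (c * l).
  by move=> z; apply: co_le => x /hs; apply: hl.
have npv : 0 < `|p - v0| by rewrite normr_gt0 subr_eq0.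
have key : 'Re (c * (p - v0)) = `|p - v0| ^+ 2.
  rewrite /c -normCKC; apply/Creal_ReP; by rewrite realX // normr_real.
have lv : l = v0.
  apply: hb; split.
    by move=> e e0; exists l; split; [apply: co_sub; apply/hs | rewrite subrr normr0].
  move=> e e0; set t := e / (2 * `|p - v0|).
  have t0 : 0 < t by rewrite divr_gt0 // mulr_gt0.
  exists (l + t * (p - v0)); split.
    move/cle; rewrite mulrDr raddfD /= (mulrCA c t) (ReMl (gtr0_real t0)) key.
    rewrite gerDl => h; have : 0 < t * `|p - v0| ^+ 2 by rewrite mulr_gt0 // exprn_gt0.
    by move/lt_geF; rewrite h.
  rewrite addrAC subrr add0r normrM gtr0_norm // /t mulrAC invfM mulrA.
  rewrite mulrAC mulfK ?gt_eqF // ltr_pdivrMr // ltr_pMr // ltr1n. done.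
have := cle p hp; rewrite lv -subr_ge0 -raddfB /= -mulrBr -opprB mulrN raddfN /= key oppr_ge0 => h.
have : 0 < `|p - v0| ^+ 2 by rewrite exprn_gt0.
by move/lt_geF; rewrite h.
Qed.

End F.
Section H.
Variable C : numClosedFieldType.

Lemma ident (a b z s : C) : s \is Num.real ->
  (- s * 'i / (b - a)) * z + ((- s * 'i / (b - a)) * z)^* =
  (- s * 'i / (b - a)) * a + ((- s * 'i / (b - a)) * a)^* + 2 * s * 'Im ((z - a) / (b - a)).
Proof.
move=> sR; set cb := - s * 'i / (b - a).
set X := cb * (z - a).
have e1 : cb * z + (cb * z)^* = cb * a + (cb * a)^* + (X + X^*).
  by rewrite /X mulrBr rmorphB /=; ring.
have e2 : X + X^* = 2 * 'Re X by rewrite ReE; field.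
have e3 : X = - s * ('i * ((z - a) / (b - a))) by rewrite /X /cb; ring.
have nsR : - s \is Num.real by rewrite rpredN.
by rewrite e1 e2 e3 (ReMl nsR) ReMil mulrNN mulrA.
Qed.


Lemma fin n (A : 'M[C]_n.+1) k (a b s : C) :
  extreme (field_of_values A) a -> extreme (field_of_values A) b -> a != b ->
  s \is Num.real -> s != 0 ->
  (forall z, field_of_values A z -> s * 'Im ((z - a) / (b - a)) <= 0) ->
  exists z, field_of_values (psubmx A k) z /\ seg a b z.
Proof.
move=> exa exb ab sR s0 hs.
set cb := - s * 'i / (b - a).
have two0 : (2 : C) != 0 by rewrite pnatr_eq0.
have h1 : forall z, field_of_values A z -> cb * z + (cb * z)^* <= cb * a + (cb * a)^*.
  move=> z Fz; rewrite ident // gerDl -mulrA pmulr_rle0 ?ltr0n //; exact: hs.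
have h2 : cb * b + (cb * b)^* = cb * a + (cb * a)^*.
  rewrite ident // divff ?subr_eq0 1?eq_sym //.
  by rewrite (Creal_ImP _ (@real1 _)) mulr0 addr0.
have [z [Fk Fz ez]] := @ML C n A k cb (cb * a + (cb * a)^*) a b h1 exa.1 exb.1 ab erefl h2.
exists z; split => //; apply: (line_seg exa exb ab Fz).
move: ez; rewrite ident // => /eqP; rewrite -subr_eq0 addrAC subrr add0r.
by rewrite -mulrA mulf_eq0 (negPf two0) mulf_eq0 (negPf s0) /= => /eqP.
Qed.

Lemma boundary_ext (P Q : C -> Prop) z : (forall x, P x <-> Q x) -> boundary P z -> boundary Q z.
Proof.
move=> h [h1 h2]; split.
  by move=> e e0; have [w [Pw hw]] := h1 e e0; exists w; split => //; apply/h.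
by move=> e e0; have [w [Pw hw]] := h2 e e0; exists w; split => //; move/h.
Qed.

End H.

Theorem mainTheorem3 (C : numClosedFieldType) (n : nat) (hn : (1 <= n)%N)
    (A : 'M[C]_n.+1) :
  convexoid A ->
  forall k : 'I_n.+1,
    inscribed (field_of_values (psubmx A k)) (field_of_values A).
Proof.
move=> hconv k v [vu [vex vbd]] j hj.
have hP : forall z, field_of_values A z <-> co (spectrum A) z := hconv.
have [sp hsp] := finite_spec A.
have [d1|d2] : size v = 1%N \/ (1 < size v)%N by lia.
- have j0 : j = 0%N by lia.
  subst j.
  set v0 := nth 0 v 0.
  have sideE : forall z, side v 0 z -> z = v0.
    by move=> z; rewrite /side d1 modnn; apply: seg_same.
  have hb : forall z, boundary (co (spectrum A)) z -> z = v0.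
    move=> z /(boundary_ext (fun x => iff_sym (hP x))) /vbd [i hi si].
    have i0 : i = 0%N by lia.
    by subst i; apply: sideE.
  have cv0 : co (spectrum A) v0.
    have ev0 : extreme (field_of_values A) v0 by apply/vex; rewrite /v0 mem_nth // d1.
    by apply/hP; exact: ev0.1.
  have allv0 := D1 hsp hb cv0.
  have i0lt : (0 < n)%N by [].
  set i0 := lift k (Ordinal i0lt).
  set u : 'cV[C]_n.+1 := delta_mx i0 ord0.
  have uk : u k ord0 = 0.
    by rewrite mxE /i0 (negPf (neq_lift _ _)).
  have un : nrm2 u = 1.
    rewrite nrm2E (bigD1 i0) //= big1 ?addr0.
      by rewrite mxE !eqxx /= conjC1 mulr1.
    by move=> i /negPf ni; rewrite mxE ni /= mulr0.
  exists (bf A u u); split; first exact: sub_fov.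
  have -> : bf A u u = v0 by apply: allv0; apply/hP; apply/fovE; exists u.
  exact: seg_l.
- set a := nth 0 v j; set b := nth 0 v (j.+1 %% size v).
  have jl : (j.+1 %% size v < size v)%N by rewrite ltn_pmod //; lia.
  have jne : j != (j.+1 %% size v)%N.
    have [jl2|jl2] := ltnP j.+1 (size v).
      by rewrite modn_small // neq_ltn ltnSn.
    have -> : j.+1 = size v by lia.
    by rewrite modnn; apply/eqP; lia.
  have ab : a != b by rewrite /a /b nth_uniq.
  have exa : extreme (field_of_values A) a by apply/vex; rewrite mem_nth.
  have exb : extreme (field_of_values A) b by apply/vex; rewrite mem_nth.
  rewrite /side -/a -/b.
  have bm : boundary (field_of_values A) ((a + b) / 2).
    apply/vbd; exists j => //; rewrite /side -/a -/b.
    have -> : (a + b) / 2 = 2^-1 * a + (1 - 2^-1) * b by field.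
    apply: seg_comb; first by rewrite invr_ge0 ler0n.
    by rewrite invf_le1 ?ler1n // ltr0n.
  have [H1|H1] := classic (forall z, field_of_values A z -> 'Im ((z - a) / (b - a)) <= 0).
    apply: (fin k exa exb ab (@real1 _) (oner_neq0 _)) => z /H1; by rewrite mul1r.
  have m1R : (-1 : C) \is Num.real by rewrite rpredN real1.
  apply: (fin k exa exb ab m1R _) => [|z Fz]; first by rewrite oppr_eq0 oner_neq0.
  rewrite mulN1r oppr_le0.
  have [//|zneg] := real_leP (@real0 C) (Creal_Im ((z - a) / (b - a))).
  exfalso; apply: H1 => p Fp.
  have [pl|pg] := real_leP (Creal_Im ((p - a) / (b - a))) (@real0 C) => //.
  exfalso.
  have [e e0 he] := interior ab ((hP a).1 exa.1) ((hP b).1 exb.1) ((hP p).1 Fp) ((hP z).1 Fz) pg zneg.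
  have [w [nw hw]] := bm.2 e e0.
  by apply: nw; apply/hP; apply: he.
Qed.
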